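(* For all $n\ge 0$, $|F_n(321,2143,3124)|=\binom{n}{2}+1$.
   Context: A permutation $\pi$ avoids a classical pattern $p\in S_k$ if no subsequence of $\pi$ of length $k$ is order-isomorphic to $p$. A Fishburn permutation is a permutation $\pi=\pi_1\cdots\pi_n$ of $[n]$ for which there are no indices $i<j$ with $\pi_j<\pi_i<\pi_{i+1}$ and $\pi_i=\pi_j+1$. $F_n(\sigma_1,\dots,\sigma_k)$ denotes the set of Fishburn permutations of length $n$ avoiding each of the classical patterns $\sigma_1,\dots,\sigma_k$ (with $F_0$ containing only the empty permutation). *)

(* Defs.v *)
From mathcomp Require Import all_boot all_fingroup.
Set Implicit Arguments. Unset Strict Implicit. Unset Printing Implicit Defensive.

(* Permutations of [n] are represented by 'S_n (permutations of 'I_n = {0..n-1});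
   pi_i (1-based) corresponds to s (i-1) (0-based), values shifted by 1, which
   preserves all order relations and the relation "pi_i = pi_j + 1". *)

Definition contains_pattern (n k : nat) (s : 'S_n) (p : 'S_k) : bool :=
  [exists f : {ffun 'I_k -> 'I_n},
     [forall a : 'I_k, forall b : 'I_k,
        ((a < b)%N ==> (f a < f b)%N) &&
        ((s (f a) < s (f b))%N == (p a < p b)%N)]].

Definition avoids (n k : nat) (s : 'S_n) (p : 'S_k) : bool :=
  ~~ contains_pattern s p.

Definition fishburn (n : nat) (s : 'S_n) : bool :=
  [forall i : 'I_n, forall j : 'I_n, forall i1 : 'I_n,
     ~~ [&& (i < j)%N, (val i1 == (val i).+1),
            (s j < s i)%N, (s i < s i1)%N & (val (s i) == (val (s j)).+1)]].

Definition pat321 : 'S_3 := perm (@rev_ord_inj 3).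

Definition perm_of_seq (k : nat) (l : seq nat) : 'I_k.+1 -> 'I_k.+1 :=
  fun i => inord (nth 0 l i).

Lemma pat2143_inj : injective (@perm_of_seq 3 [:: 1; 0; 3; 2]).
Proof.
move=> [[|[|[|[|i]]]] Hi] [[|[|[|[|j]]]] Hj] //= /(congr1 val);
  rewrite /perm_of_seq /= ?inordK //= => E; by apply: val_inj.
Qed.
Lemma pat3124_inj : injective (@perm_of_seq 3 [:: 2; 0; 1; 3]).
Proof.
move=> [[|[|[|[|i]]]] Hi] [[|[|[|[|j]]]] Hj] //= /(congr1 val);
  rewrite /perm_of_seq /= ?inordK //= => E; by apply: val_inj.
Qed.

Definition pat2143 : 'S_4 := perm pat2143_inj.
Definition pat3124 : 'S_4 := perm pat3124_inj.

Definition F_321_2143_3124 (n : nat) : {set 'S_n} :=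
  [set s : 'S_n | [&& fishburn s, avoids s pat321, avoids s pat2143 & avoids s pat3124]].

(* Main.v *)
Require Import Defs.
From mathcomp Require Import all_boot all_fingroup zify.
Set Implicit Arguments. Unset Strict Implicit. Unset Printing Implicit Defensive.
Lemma permne n (s : 'S_n) (x y : 'I_n) : x < y -> nat_of_ord (s x) != nat_of_ord (s y).
Proof. by move=> h; rewrite val_eqE (inj_eq perm_inj) neq_ltn h. Qed.
Lemma c321P n (s : 'S_n) : contains_pattern s pat321 ->
  exists x0 x1 x2 : 'I_n, [/\ x0 < x1, x1 < x2, s x2 < s x1 & s x1 < s x0].
Proof.
case/existsP => f /forallP H.
pose o0 : 'I_3 := @Ordinal 3 0 isT. pose o1 : 'I_3 := @Ordinal 3 1 isT.
pose o2 : 'I_3 := @Ordinal 3 2 isT.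
have H01 := forallP (H o0) o1; have H12 := forallP (H o1) o2.
rewrite /pat321 !permE /= in H01 H12.
move: H01 H12 => /andP [h1 /eqP /negbT e1] /andP [h2 /eqP /negbT e2].
have := permne s h1; have := permne s h2.
exists (f o0), (f o1), (f o2); clearbody o0 o1 o2; split => //; move: (s (f o0)) (s (f o1)) (s (f o2)) (f o0) (f o1) (f o2) H0 H1 e1 e2 => x0 x1 x2 y0 y1 y2; lia.
Qed.
Lemma c321I n (s : 'S_n) (x0 x1 x2 : 'I_n) : x0 < x1 -> x1 < x2 -> s x2 < s x1 -> s x1 < s x0 ->
  contains_pattern s pat321.
Proof.
move=> h1 h2 h3 h4; apply/existsP; exists [ffun i : 'I_3 => nth x0 [:: x0; x1; x2] i].
apply/forallP => -[[|[|[|a]]] Ha] //; apply/forallP => -[[|[|[|b]]] Hb] //;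
  rewrite !ffunE /pat321 !permE /=; lia.
Qed.
Lemma c2143P n (s : 'S_n) : contains_pattern s pat2143 ->
  exists x0 x1 x2 x3 : 'I_n, x0 < x1 /\ x1 < x2 /\ x2 < x3 /\
     s x1 < s x0 /\ s x0 < s x3 /\ s x3 < s x2.
Proof.
case/existsP => f /forallP H.
pose o0 : 'I_4 := @Ordinal 4 0 isT. pose o1 : 'I_4 := @Ordinal 4 1 isT.
pose o2 : 'I_4 := @Ordinal 4 2 isT. pose o3 : 'I_4 := @Ordinal 4 3 isT.
have H01 := forallP (H o0) o1; have H12 := forallP (H o1) o2.
have H23 := forallP (H o2) o3; have H03 := forallP (H o0) o3.
rewrite /pat2143 !permE /perm_of_seq /= !inordK // in H01 H12 H23 H03.
move: H01 H12 H23 H03 => /andP [h1 /eqP /negbT e1] /andP [h2 _]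
  /andP [h3 /eqP /negbT e3] /andP [_ /eqP e4].
have ne1 := permne s h1; have ne3 := permne s h3.
exists (f o0), (f o1), (f o2), (f o3); clearbody o0 o1 o2 o3.
move: (s (f o0)) (s (f o1)) (s (f o2)) (s (f o3)) ne1 ne3 e1 e3 e4 => u0 u1 u2 u3.
move: (f o0) (f o1) (f o2) (f o3) h1 h2 h3 => y0 y1 y2 y3; lia.
Qed.
Lemma c2143I n (s : 'S_n) (x0 x1 x2 x3 : 'I_n) : x0 < x1 -> x1 < x2 -> x2 < x3 ->
  s x1 < s x0 -> s x0 < s x3 -> s x3 < s x2 -> contains_pattern s pat2143.
Proof.
move=> h1 h2 h3 h4 h5 h6; apply/existsP; exists [ffun i : 'I_4 => nth x0 [:: x0; x1; x2; x3] i].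
apply/forallP => -[[|[|[|[|a]]]] Ha] //; apply/forallP => -[[|[|[|[|b]]]] Hb] //;
  rewrite !ffunE /pat2143 !permE /perm_of_seq /= !inordK //=; lia.
Qed.
Lemma c3124P n (s : 'S_n) : contains_pattern s pat3124 ->
  exists x0 x1 x2 x3 : 'I_n, x0 < x1 /\ x1 < x2 /\ x2 < x3 /\
     s x1 < s x2 /\ s x2 < s x0 /\ s x0 < s x3.
Proof.
case/existsP => f /forallP H.
pose o0 : 'I_4 := @Ordinal 4 0 isT. pose o1 : 'I_4 := @Ordinal 4 1 isT.
pose o2 : 'I_4 := @Ordinal 4 2 isT. pose o3 : 'I_4 := @Ordinal 4 3 isT.
have H01 := forallP (H o0) o1; have H12 := forallP (H o1) o2.
have H23 := forallP (H o2) o3; have H03 := forallP (H o0) o3.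
have H02 := forallP (H o0) o2.
rewrite /pat3124 !permE /perm_of_seq /= !inordK // in H01 H12 H23 H03 H02.
move: H01 H12 H23 H03 H02 => /andP [h1 _] /andP [h2 /eqP e1]
  /andP [h3 _] /andP [_ /eqP e3] /andP [h4 /eqP /negbT e4].
have ne1 := permne s h4; have ne3 := ne1.
exists (f o0), (f o1), (f o2), (f o3); clearbody o0 o1 o2 o3.
move: (s (f o0)) (s (f o1)) (s (f o2)) (s (f o3)) ne1 ne3 e1 e3 e4 => u0 u1 u2 u3.
move: (f o0) (f o1) (f o2) (f o3) h1 h2 h3 => y0 y1 y2 y3; lia.
Qed.
Lemma c3124I n (s : 'S_n) (x0 x1 x2 x3 : 'I_n) : x0 < x1 -> x1 < x2 -> x2 < x3 ->
  s x1 < s x2 -> s x2 < s x0 -> s x0 < s x3 -> contains_pattern s pat3124.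
Proof.
move=> h1 h2 h3 h4 h5 h6; apply/existsP; exists [ffun i : 'I_4 => nth x0 [:: x0; x1; x2; x3] i].
apply/forallP => -[[|[|[|[|a]]]] Ha] //; apply/forallP => -[[|[|[|[|b]]]] Hb] //;
  rewrite !ffunE /pat3124 !permE /perm_of_seq /= !inordK //=; lia.
Qed.
Definition g (n a b i : nat) : nat :=
  if i < a then i else if i == a then b else if i == a.+1 then a
  else if i <= n + a - b then i + b - a - 1 else i + b - n.
Definition cl (n a b i : nat) : nat :=
  if i < a then 0 else if i == a then 1 else if i == a.+1 then 2
  else if i <= n + a - b then 3 else 4.
Definition invb (c d : nat) := ((c == 1) && ((d == 2) || (d == 4))) || ((c == 3) && (d == 4)).
Definition okb (c d : nat) := [&& c <= d, d < 5, ~~ ((c == 1) && (d == 1)) & ~~ ((c == 2) && (d == 2))].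
Ltac splitifs := repeat match goal with |- context [if ?c then _ else _] => case: (boolP c) => ? end.
Lemma g_pair n a b i j : a < b -> b < n -> i < j -> j < n ->
  okb (cl n a b i) (cl n a b j) && ((g n a b j < g n a b i) == invb (cl n a b i) (cl n a b j)).
Proof. move=> *; rewrite /g /cl; splitifs; rewrite /okb /invb /=; lia. Qed.
Lemma g_fish n a b i j : a < b -> b < n -> i < j -> j < n -> i.+1 < n ->
  g n a b j < g n a b i -> g n a b i < g n a b i.+1 -> g n a b i = (g n a b j).+1 -> False.
Proof. move=> h1 h2 h3 h4 h5; rewrite /g; splitifs; lia. Qed.
Lemma invbP c d : invb c d -> (c = 1 /\ d = 2) \/ (c = 1 /\ d = 4) \/ (c = 3 /\ d = 4).
Proof. rewrite /invb; lia. Qed.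
Lemma no321 c0 c1 c2 : okb c0 c1 -> okb c1 c2 -> invb c0 c1 -> invb c1 c2 -> False.
Proof. move=> h1 h2 /invbP h3 /invbP; move: h1 h2 h3; rewrite /okb; lia. Qed.
Lemma no2143 c0 c1 c2 c3 : okb c0 c1 -> okb c1 c2 -> okb c2 c3 -> invb c0 c1 -> invb c2 c3 -> ~~ invb c0 c3 -> False.
Proof.
move=> h1 h2 h3 /invbP [[? ?]|[[? ?]|[? ?]]] /invbP [[? ?]|[[? ?]|[? ?]]]; subst;
  move: h1 h2 h3; rewrite /okb /invb; lia.
Qed.
Lemma no3124 c0 c1 c2 c3 : okb c0 c1 -> okb c1 c2 -> okb c2 c3 -> invb c0 c1 -> invb c0 c2 -> ~~ invb c0 c3 -> False.
Proof.
move=> h1 h2 h3 /invbP [[? ?]|[[? ?]|[? ?]]]; subst; move: h2 h3; rewrite /okb /invb; lia.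
Qed.
Definition gg n a b i := if a < b then g n a b i else i.
Lemma gg_lt n a b i : b < n -> i < n -> gg n a b i < n.
Proof. move=> hb hi; rewrite /gg /g; splitifs; lia. Qed.
Lemma gg_inj n a b i j : b < n -> i < n -> j < n -> gg n a b i = gg n a b j -> i = j.
Proof. move=> hb hi hj; rewrite /gg /g; splitifs; lia. Qed.
Definition sigmaf n (a b : 'I_n) (i : 'I_n) : 'I_n := Ordinal (gg_lt a (ltn_ord b) (ltn_ord i)).
Lemma sigmaf_inj n (a b : 'I_n) : injective (sigmaf a b).
Proof. move=> i j /(congr1 val) /= h; apply: val_inj; exact: (gg_inj (ltn_ord b) (ltn_ord i) (ltn_ord j) h). Qed.
Definition sigma n (a b : 'I_n) : 'S_n := perm (@sigmaf_inj n a b).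
Lemma sigmaE n (a b x : 'I_n) : a < b -> nat_of_ord (sigma a b x) = g n a b x.
Proof. by move=> ab; rewrite permE /= /gg ab. Qed.

Lemma sigma_in n (a b : 'I_n) : a < b -> sigma a b \in F_321_2143_3124 n.
Proof.
move=> ab; have bn := ltn_ord b; rewrite inE; apply/and4P; split.
- apply/forallP => i; apply/forallP => j; apply/forallP => i1.
  apply/negP => /and5P [h1 /eqP h2 h3 h4 /eqP h5].
  move: h3 h4 h5; rewrite /= !sigmaE // h2 => h3 h4 h5.
  have i1n : (val i).+1 < n by rewrite -h2; exact: ltn_ord.
  exact: (g_fish ab bn h1 (ltn_ord j) i1n h3 h4 h5).
- apply/negP => /c321P [x0 [x1 [x2 [h1 h2 h3 h4]]]]; rewrite !sigmaE // in h3 h4.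
  have /andP [o01 /eqP e01] := g_pair ab bn h1 (ltn_ord x1).
  have /andP [o12 /eqP e12] := g_pair ab bn h2 (ltn_ord x2).
  rewrite h4 in e01; rewrite h3 in e12.
  exact: (no321 o01 o12 (esym e01) (esym e12)).
- apply/negP => /c2143P [x0 [x1 [x2 [x3 [h1 [h2 [h3 [h4 [h5 h6]]]]]]]]]; rewrite !sigmaE // in h4 h5 h6.
  have /andP [o01 /eqP e01] := g_pair ab bn h1 (ltn_ord x1).
  have /andP [o12 /eqP e12] := g_pair ab bn h2 (ltn_ord x2).
  have /andP [o23 /eqP e23] := g_pair ab bn h3 (ltn_ord x3).
  have /andP [o03 /eqP e03] := g_pair ab bn (ltn_trans h1 (ltn_trans h2 h3)) (ltn_ord x3).
  rewrite h4 in e01; rewrite h6 in e23; rewrite ltnNge (ltnW h5) in e03.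
  apply: (no2143 o01 o12 o23 (esym e01) (esym e23)); by rewrite -e03.
- apply/negP => /c3124P [x0 [x1 [x2 [x3 [h1 [h2 [h3 [h4 [h5 h6]]]]]]]]]; rewrite !sigmaE // in h4 h5 h6.
  have /andP [o01 /eqP e01] := g_pair ab bn h1 (ltn_ord x1).
  have /andP [o12 /eqP e12] := g_pair ab bn h2 (ltn_ord x2).
  have /andP [o23 /eqP e23] := g_pair ab bn h3 (ltn_ord x3).
  have /andP [o02 /eqP e02] := g_pair ab bn (ltn_trans h1 h2) (ltn_ord x2).
  have /andP [o03 /eqP e03] := g_pair ab bn (ltn_trans h1 (ltn_trans h2 h3)) (ltn_ord x3).
  rewrite (ltn_trans h4 h5) in e01; rewrite h5 in e02; rewrite ltnNge (ltnW h6) in e03.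
  apply: (no3124 o01 o12 o23 (esym e01) (esym e02)); by rewrite -e03.
Qed.

Lemma g_spec n a b i : a < b -> b < n -> i < n ->
  (i < a /\ g n a b i = i) \/ (i = a /\ g n a b i = b) \/ (i = a.+1 /\ g n a b i = a) \/
  (a.+1 < i <= n + a - b /\ g n a b i = i + b - a - 1) \/ (n + a - b < i /\ g n a b i = i + b - n).
Proof. move=> *; rewrite /g; repeat case: ifP => ?; lia. Qed.
Lemma g_inj n a b i j : a < b -> b < n -> i < n -> j < n -> g n a b i = g n a b j -> i = j.
Proof. move=> ab bn hi hj; have := @gg_inj n a b i j bn hi hj; rewrite /gg ab; exact. Qed.
Lemma sinj n (s : 'S_n) (x y : 'I_n) : nat_of_ord (s x) = s y -> x = y.
Proof. by move=> h; apply: (@perm_inj _ s); apply: val_inj. Qed.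
Lemma ex_pos n (s : 'S_n) (v : nat) : v < n -> exists j : 'I_n, nat_of_ord (s j) = v.
Proof. move=> h; exists ((s^-1)%g (Ordinal h)); by rewrite permKV. Qed.

Lemma F_char n (s : 'S_n) : s \in F_321_2143_3124 n -> s != 1%g ->
  exists a b : 'I_n, a < b /\ s = sigma a b.
Proof.
rewrite inE => /and4P [fs a321 a2143 a3124] hs1.
have [i0 hi0] : exists i0, s i0 != i0.
  apply/existsP; apply: contraR hs1 => /existsPn h; apply/eqP/permP => i.
  by rewrite perm1; apply/eqP; move: (h i); rewrite negbK.
case: (@arg_minnP _ i0 (fun i => s i != i) (fun i : 'I_n => nat_of_ord i) hi0) => a ha amin.
have hfix : forall i : 'I_n, i < a -> nat_of_ord (s i) = i.
  move=> i hi; apply/eqP; apply: contraTT hi => hne; rewrite -leqNgt; apply: amin.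
  by apply: contra hne => /eqP ->.
have lowinv : forall i : 'I_n, s i < a -> nat_of_ord (s i) = i.
  move=> i hi; have := hfix (s i) hi => /sinj ->. done.
have sane : nat_of_ord (s a) != a by apply: contra ha => /eqP h; apply/eqP/val_inj.
have ab : a < s a.
  rewrite ltn_neqAle eq_sym sane /= leqNgt; apply/negP => h.
  by move: (lowinv a h) sane => ->; rewrite eqxx.
have [q sq] := ex_pos s (ltn_ord a).
have aq : a < q.
  case: (ltngtP a q) => // h.
  - have := hfix q h; lia.
  - have e : a = q by apply: val_inj.
    by subst q; rewrite sq eqxx in sane.
have q1 : nat_of_ord q = a.+1.
  apply/eqP; rewrite eqn_leq aq andbT leqNgt; apply/negP => hq.
  have a1n : a.+1 < n by apply: ltn_trans hq (ltn_ord q).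
  pose a1 := Ordinal a1n.
  have c_gt : a < s a1.
    case: (ltngtP a (s a1)) => // h.
    - have := lowinv a1 h; rewrite /=; lia.
    - have e : nat_of_ord (s a1) = s q by rewrite sq h.
      by move/sinj: e => e; move: hq; rewrite -e /= ltnn.
  case: (ltngtP (s a1) (s a)) => h.
  - move: a321 => /negP; apply; apply: (@c321I _ _ a a1 q) => //=; by rewrite sq.
  - have san : (nat_of_ord (s a)).-1 < n by have := ltn_ord (s a); lia.
    have [j sj] := ex_pos s san.
    have aj : a < j.
      case: (ltngtP a j) => // hj.
      + have := hfix j hj; lia.
      + have e : a = j by apply: val_inj.
        by subst j; lia.
    move/forallP: fs => /(_ a)/forallP/(_ j)/forallP/(_ a1) /negP; apply.
    apply/and5P; split => //=; try lia.
  - move/sinj: h => h; have := congr1 val h; rewrite /=; lia.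
have big : forall i : 'I_n, a.+1 < i -> a < s i /\ nat_of_ord (s i) != s a.
  move=> i hi; split.
  - case: (ltngtP a (s i)) => // h.
    + have := lowinv i h; lia.
    + have e : nat_of_ord (s i) = s q by rewrite sq h.
      move/sinj: e => e; subst i; lia.
  - apply/negP => /eqP /sinj e; subst i; lia.
have F1 : forall i j : 'I_n, a.+1 < i -> i < j -> s i < s a -> s j < s a -> s i < s j.
  move=> i j hi hj h1 h2; case: (ltngtP (s i) (s j)) => // h.
  - move: a321 => /negP; case; apply: (@c321I _ _ a i j) => //; lia.
  - move/sinj: h => e; subst; lia.
have F2 : forall i j : 'I_n, a.+1 < i -> i < j -> s a < s i -> s a < s j -> s i < s j.
  move=> i j hi hj h1 h2; case: (ltngtP (s i) (s j)) => // h.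
  - move: a2143 => /negP; case; apply: (@c2143I _ _ a q i j) => //; lia.
  - move/sinj: h => e; subst; lia.
have F3 : forall i j : 'I_n, a.+1 < i -> i < j -> s i < s a -> s a < s j -> False.
  move=> i j hi hj h1 h2; have [h3 _] := big i hi.
  move: a3124 => /negP; case; apply: (@c3124I _ _ a q i j) => //; lia.
have bn := ltn_ord (s a).
have main : forall k (i : 'I_n), i < k -> nat_of_ord (s i) = g n a (s a) i.
  elim=> [//|k IH] i hik.
  case: (ltnP i k) => [/IH //|hki].
  have IH' : forall j : 'I_n, j < i -> nat_of_ord (s j) = g n a (s a) j.
    by move=> j hj; apply: IH; lia.
  have low : forall k, k < i -> nat_of_ord (s i) = g n a (s a) k -> False.
    move=> k' hk e; have kn : k' < n by have := ltn_ord i; lia.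
    have := IH' (Ordinal kn) hk; rewrite /= -e => /sinj e'.
    by move: (congr1 val e') => /=; lia.
  have ilt := ltn_ord i; have sil := ltn_ord (s i).
  case: (g_spec ab bn (ltn_ord i)) => [[h ->]|[[h ->]|[[h ->]|[[h ->]|[h ->]]]]].
  - exact: hfix.
  - by have -> : i = a by apply: val_inj.
  - by have -> : i = q by apply: val_inj; rewrite /= h q1.
  - have wn : i + s a - a - 1 < n by lia.
    have [j sj] := ex_pos s wn.
    case: (ltngtP j i) => hji.
    + have := IH' j hji; rewrite sj; have := g_spec ab bn (ltn_ord j); lia.
    + have [h1 h2] := big i (proj1 (andP h)).
      case: (ltngtP (s i) (s a)) => hb.
      * exfalso; apply: (F3 i j) => //; lia.
      * have := F2 i j (proj1 (andP h)) hji hb (_ : s a < s j); rewrite sj => /(_ _).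
        move=> /(_ ltac:(lia)) hij.
        have kn : s i - s a + a + 1 < n by lia.
        exfalso; apply: (low (s i - s a + a + 1)); first by lia.
        have := g_spec ab bn kn; lia.
      * by rewrite hb eqxx in h2.
    + have e : j = i by apply: val_inj. by subst j.
  - have wn : i + s a - n < n by lia.
    have [j sj] := ex_pos s wn.
    case: (ltngtP j i) => hji.
    + have := IH' j hji; rewrite sj; have := g_spec ab bn (ltn_ord j); lia.
    + have ia1 : a.+1 < i by lia.
      have [h1 h2] := big i ia1.
      case: (ltngtP (s i) (s a)) => hb.
      * have := F1 i j ia1 hji hb; rewrite sj => /(_ ltac:(lia)) hij.
        have kn : s i + n - s a < n by lia.
        exfalso; apply: (low (s i + n - s a)); first by lia.
        have := g_spec ab bn kn; lia.
      * have kn : s i - s a + a + 1 < n by have := ltn_ord (s i); lia.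
        exfalso; apply: (low (s i - s a + a + 1)); first by lia.
        have := g_spec ab bn kn; lia.
      * by rewrite hb eqxx in h2.
    + have e : j = i by apply: val_inj. by subst j.
exists a, (s a); split => //.
apply/permP => x; apply: val_inj; rewrite /= sigmaE //; exact: (main x.+1 x (ltnSn _)).
Qed.


Lemma sum_lt n j : j <= n -> \sum_(i < n) (i < j : nat) = j.
Proof.
move=> hj; rewrite -(big_mkord xpredT (fun i => (i < j : nat))).
rewrite (big_cat_nat (leq0n j) hj) /=.
rewrite (eq_big_nat _ _ (F2 := fun _ => 1)); last by move=> i /andP [_ ->].
rewrite [X in _ + X]big_nat_cond [X in _ + X](eq_bigr (fun _ => 0)); last first.
  by move=> i /andP [/andP [h _] _]; rewrite ltnNge h.
by rewrite sum_nat_const_nat muln1 subn0 big1 // addn0.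
Qed.
Lemma cardP n : #|[set p : 'I_n * 'I_n | p.1 < p.2]| = 'C(n, 2).
Proof.
rewrite -sum1_card big_mkcond /=.
under eq_bigr => p _ do rewrite inE.
rewrite -(pair_big xpredT xpredT (fun i j : 'I_n => if i < j then 1 else 0)) /=.
rewrite exchange_big /= -bin2_sum big_mkord; apply: eq_bigr => j _.
rewrite -{2}(@sum_lt n j (ltnW (ltn_ord j))); apply: eq_bigr => i _.
by case: (i < j).
Qed.

Lemma one_in n : (1%g : 'S_n) \in F_321_2143_3124 n.
Proof.
rewrite inE; apply/and4P; split.
- apply/forallP => i; apply/forallP => j; apply/forallP => i1.
  apply/negP => /and5P [h1 _ h3 _ _]; rewrite !perm1 in h3; lia.
- apply/negP => /c321P [x0 [x1 [x2 [h1 h2 h3 h4]]]]; rewrite !perm1 in h3; lia.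
- apply/negP => /c2143P [x0 [x1 [x2 [x3 [h1 [h2 [h3 [h4 _]]]]]]]]; rewrite !perm1 in h4; lia.
- apply/negP => /c3124P [x0 [x1 [x2 [x3 [h1 [h2 [h3 [h4 [h5 _]]]]]]]]]; rewrite !perm1 in h5; lia.
Qed.
Lemma sigma_a n (a b : 'I_n) : a < b -> nat_of_ord (sigma a b a) = b.
Proof. by move=> ab; rewrite sigmaE // /g ltnn eqxx. Qed.
Lemma sigma_fix n (a b x : 'I_n) : a < b -> x < a -> nat_of_ord (sigma a b x) = x.
Proof. by move=> ab xa; rewrite sigmaE // /g xa. Qed.
Lemma sigma_ne1 n (a b : 'I_n) : a < b -> sigma a b != 1%g.
Proof. move=> ab; apply/eqP => e; have := sigma_a ab; rewrite e perm1; lia. Qed.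
Lemma sigma_inj n (a b a' b' : 'I_n) : a < b -> a' < b' -> sigma a b = sigma a' b' -> a = a' /\ b = b'.
Proof.
move=> ab ab' e; case: (ltngtP a a') => h.
- have := sigma_fix ab' h; rewrite -e sigma_a //; lia.
- have := sigma_fix ab h; rewrite e sigma_a //; lia.
- have ea : a = a' by apply: val_inj.
  subst a'; split => //; apply: val_inj; rewrite /= -(sigma_a ab) -(sigma_a ab') e //.
Qed.

Theorem mainTheorem11 (n : nat) : #|F_321_2143_3124 n| = 'C(n, 2) + 1.
Proof.
pose P := [set p : 'I_n * 'I_n | p.1 < p.2].
have eF : F_321_2143_3124 n = 1%g |: [set sigma p.1 p.2 | p in P].
  apply/setP => s; rewrite in_setU1; case: (boolP (s == 1%g)) => [/eqP -> | hs] /=.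
  - by rewrite one_in.
  - apply/idP/idP.
    + move=> hF; have [a [b [ab ->]]] := F_char hF hs.
      by apply/imsetP; exists (a, b); rewrite // inE.
    + by case/imsetP => p; rewrite inE => hp ->; apply: sigma_in.
rewrite eF cardsU1 card_in_imset.
- rewrite cardP addnC; congr (_ + _).
  apply/eqP; rewrite eqb1; apply/imsetP => -[p]; rewrite inE => hp e.
  by move: (sigma_ne1 hp); rewrite -e eqxx.
- move=> p p'; rewrite !inE => hp hp' e.
  have [e1 e2] := sigma_inj hp hp' e.
  by case: p p' {hp hp' e} e1 e2 => [x y] [x' y'] /= -> ->.
Qed.
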